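(* Let $l\ge 3$ and let $V_l$ be the set of Hirzebruch-Jung continued fractions $[n_1,\dots,n_l]$ of length $l$ (all $n_j\ge 2$ integers) satisfying $-1\le q_1+q_l-q\le 1$. Then: (1) no element of the form $[2,n_2,\dots,n_{l-1},2]$ lies in $V_l$; (2) if $n_1\ge 3$ and $n_l\ge 3$, then $[n_1,\dots,n_l]\notin V_l$; (3) no element of $V_l$ satisfies $\sum_{j=1}^l n_j=3l-4$.
   Context: For $[n_1,\dots,n_l]$ let $M(-n_1,\dots,-n_l)$ be the $l\times l$ tridiagonal symmetric matrix with diagonal entries $-n_1,\dots,-n_l$, entries $1$ directly above and below the diagonal, and $0$ elsewhere. Put $q=|\det M(-n_1,\dots,-n_l)|$, $q_1=|\det M(-n_2,\dots,-n_l)|$, $q_l=|\det M(-n_1,\dots,-n_{l-1})|$. *)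

(* Defs.v *)
From mathcomp Require Import all_boot all_order all_algebra.
Set Implicit Arguments. Unset Strict Implicit. Unset Printing Implicit Defensive.
Import Order.TTheory GRing.Theory Num.Theory.
Local Open Scope ring_scope.

Definition HJmx (s : seq int) : 'M[int]_(size s) :=
  \matrix_(i < size s, j < size s)
    (if i == j then - s`_i
     else if ((i.+1 == j :> nat) || (j.+1 == i :> nat)) then 1 else 0).

Definition HJq (s : seq int) : int := `| \det (HJmx s) |.

Definition q_full (s : seq int) : int := HJq s.
Definition q_first (s : seq int) : int := HJq (behead s).
Definition q_last (s : seq int) : int := HJq (take (size s).-1 s).

Definition in_V (l : nat) (s : seq int) : Prop :=
  size s = l /\ (forall j, (j < size s)%N -> 2 <= s`_j) /\
  -1 <= q_first s + q_last s - q_full s <= 1.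

(* Main.v *)
Require Import Defs.
From mathcomp Require Import all_boot all_order all_algebra ring lra zify.
Import Order.TTheory GRing.Theory Num.Theory.
Local Open Scope ring_scope.

Lemma HJdet2 a b x : \det (HJmx [:: a, b & x]) = - a * \det (HJmx (b :: x)) - \det (HJmx x).
Proof.
rewrite (expand_det_row _ ord0) !big_ord_recl big1 ?addr0; last first.
  by move=> i _; rewrite !mxE /=; exact: mul0r.
rewrite /cofactor.
have -> : row' ord0 (col' ord0 (HJmx [:: a, b & x])) = HJmx (b :: x).
  by apply/matrixP => i j; rewrite !mxE.
rewrite !mxE /= expr0 mul1r expr1 mulN1r mul1r.
congr (_ + _).
set M := row' _ _.
rewrite (expand_det_col M ord0) big_ord_recl big1 ?addr0; last first.
  by move=> i _; rewrite !mxE /=; exact: mul0r.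
have -> : M ord0 ord0 = 1 by rewrite !mxE.
rewrite mul1r /cofactor expr0 mul1r.
congr (- \det _).
by apply/matrixP => i j; rewrite !mxE.
Qed.
Definition stp (ab : int * int) (n : int) : int * int := (n * ab.1 - ab.2, ab.1).
Definition PQ (x : seq int) := foldl stp (1, 0) x.
Definition P x := (PQ x).1.
Definition Q x := (PQ x).2.

Lemma foldl_lin x : forall u1 u2 v1 v2 al be,
  foldl stp (al * u1 + be * v1, al * u2 + be * v2) x =
  (al * (foldl stp (u1, u2) x).1 + be * (foldl stp (v1, v2) x).1,
   al * (foldl stp (u1, u2) x).2 + be * (foldl stp (v1, v2) x).2).
Proof.
elim: x => [|n x IH] u1 u2 v1 v2 al be //=.
rewrite /stp /=.
have -> : (n * (al * u1 + be * v1) - (al * u2 + be * v2), al * u1 + be * v1)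
  = (al * (n * u1 - u2) + be * (n * v1 - v2), al * u1 + be * v1) by congr pair; ring.
exact: IH.
Qed.

Lemma fold01 b x : foldl stp (0, 1) (b :: x) = (- P x, - Q x).
Proof.
rewrite /= /stp /=.
have -> : (b * 0 - 1, 0) = ((-1) * 1 + 0 * 0, (-1) * 0 + 0 * 0) :> (int * int)%type
  by congr pair; ring.
rewrite foldl_lin /P /Q /PQ; congr pair; ring.
Qed.

Lemma PQcons a x : x != [::] ->
  P (a :: x) = a * P x - P (behead x) /\ Q (a :: x) = a * Q x - Q (behead x).
Proof.
case: x => [|b x] // _.
rewrite /P /Q /PQ.
change ((foldl stp (stp (stp (1,0) a) b) x).1 = a * (foldl stp (stp (1,0) b) x).1 - (foldl stp (1,0) x).1 /\
  (foldl stp (stp (stp (1,0) a) b) x).2 = a * (foldl stp (stp (1,0) b) x).2 - (foldl stp (1,0) x).2).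
have -> : stp (stp (1,0) a) b = (a * (stp (1,0) b).1 + (-1) * 1, a * (stp (1,0) b).2 + (-1) * 0).
  rewrite /stp /=; congr pair; ring.
case: (stp (1,0) b) => u v /=.
rewrite foldl_lin /=; split; ring.
Qed.

Lemma PQrcons x c : P (rcons x c) = c * P x - Q x /\ Q (rcons x c) = P x.
Proof. by rewrite /P /Q /PQ -cats1 foldl_cat. Qed.

Lemma P0 : P [::] = 1. Proof. by []. Qed.
Lemma Q0 : Q [::] = 0. Proof. by []. Qed.

Lemma PQdet w : w != [::] -> Q w * P (behead w) - P w * Q (behead w) = 1.
Proof.
elim/last_ind: w => [|w c IH] // _.
case: (eqVneq w [::]) => [->|wn]; first by rewrite /P /Q /= /stp /=; ring.
have Hb : behead (rcons w c) = rcons (behead w) c by case: w wn {IH}.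
rewrite Hb.
have [P1 Q1] := PQrcons w c; have [P2 Q2] := PQrcons (behead w) c.
rewrite P1 Q1 P2 Q2.
have := IH wn. lia.
Qed.

Definition ge2 (x : seq int) := all (fun n : int => 2 <= n) x.

Lemma PQpos x : ge2 x -> 0 <= Q x /\ Q x < P x.
Proof.
elim/last_ind: x => [|x c IH]; first by rewrite /P /Q.
rewrite /ge2 all_rcons => /andP[hc hx].
have [h1 h2] := IH hx.
have [P1 Q1] := PQrcons x c; rewrite P1 Q1.
split; first lia.
nia.
Qed.

Lemma keyA (b p q : int) : 2 <= b -> q < p -> 0 <= p -> p < b * p - q.
Proof. move=> *; nia. Qed.

Lemma Pbehead x : ge2 x -> x != [::] -> P (behead x) < P x.
Proof.
elim: x => [|b x IH] // /andP [hb hx] _ /=.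
case: (eqVneq x [::]) => [->|xn]; first by rewrite /P /= /stp /=; lia.
have [-> _] := PQcons b x xn.
have := IH hx xn. have := @PQpos x hx. move=> [h1 h2] h3; apply: keyA => //; lia.
Qed.

Lemma detP x : \det (HJmx x) = (-1) ^+ size x * P x /\
  forall b, \det (HJmx (b :: x)) = (-1) ^+ (size x).+1 * P (b :: x).
Proof.
elim: x => [|c x [IH1 IH2]].
  split; first by rewrite det_mx00.
  by move=> b; rewrite [LHS]det_mx11 mxE /P /= /stp /=; ring.
split; first exact: IH2.
move=> b; rewrite HJdet2 IH1 IH2.
have [-> _] := @PQcons b (c :: x) isT.
rewrite /= !exprS; ring.
Qed.

Lemma ge2_behead x : ge2 x -> ge2 (behead x).
Proof. by case: x => //= a x /andP[]. Qed.

Lemma ge2_take n x : ge2 x -> ge2 (take n x).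
Proof. by rewrite /ge2 -{1}(cat_take_drop n x) all_cat => /andP[]. Qed.

Lemma HJqP x : ge2 x -> HJq x = P x.
Proof.
move=> hx; rewrite /HJq (proj1 (detP x)) normrM normrX normrN1 expr1n mul1r.
have [h1 h2] := @PQpos x hx.
apply/gtr0_norm; lia.
Qed.

Lemma qlastQ x : ge2 x -> x != [::] -> q_last x = Q x.
Proof.
elim/last_ind: x => [|y d _] // hx _.
rewrite /q_last size_rcons /= -cats1 take_size_cat // HJqP.
  by rewrite cats1 (proj2 (PQrcons y d)).
by move: hx; rewrite /ge2 all_rcons => /andP[].
Qed.

Lemma behead_rcons (w : seq int) c : w != [::] -> behead (rcons w c) = rcons (behead w) c.
Proof. by case: w. Qed.

Lemma Vexpr a w c : w != [::] -> ge2 (a :: rcons w c) ->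
  [/\ q_first (a :: rcons w c) = c * P w - Q w,
      q_last (a :: rcons w c) = a * P w - P (behead w) &
      q_full (a :: rcons w c) = a * (c * P w - Q w) - (c * P (behead w) - Q (behead w))].
Proof.
move=> wn hs.
have hr : ge2 (rcons w c) by move: hs => /andP[].
have hrn : rcons w c != [::] by case: (w).
split.
- by rewrite /q_first /= HJqP // (proj1 (PQrcons w c)).
- rewrite qlastQ //= (proj2 (PQcons a _ hrn)) (proj2 (PQrcons w c)) behead_rcons //.
  by rewrite (proj2 (PQrcons (behead w) c)).
- rewrite /q_full HJqP // (proj1 (PQcons a _ hrn)) (proj1 (PQrcons w c)) behead_rcons //.
  by rewrite (proj1 (PQrcons (behead w) c)).
Qed.

Lemma Qpos w : ge2 w -> w != [::] -> 1 <= Q w.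
Proof.
elim/last_ind: w => [|y d _] // hw _.
rewrite (proj2 (PQrcons y d)).
have hy : ge2 y by move: hw; rewrite /ge2 all_rcons => /andP[].
have [h1 h2] := @PQpos y hy; lia.
Qed.

Lemma key1 (p pb ph phb : int) : 1 <= pb -> phb < ph ->
  2 <= (2 * p - pb) + (2 * p - ph) - (2 * (2 * p - pb) - (2 * ph - phb)).
Proof. move=> *; lia. Qed.

Lemma key2 (a c p pb ph phb : int) : 3 <= a -> 3 <= c -> pb < p -> ph < p -> 0 <= pb ->
  pb * ph - p * phb = 1 ->
  (c * p - pb) + (a * p - ph) - (a * (c * p - pb) - (c * ph - phb)) <= -2.
Proof.
move=> ha hc h1 h2 h3 hd.
set V := (c * p - pb) + (a * p - ph) - (a * (c * p - pb) - (c * ph - phb)).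
have hX : p + 1 <= c * p - p - pb.
  have : 0 <= (c - 3) * p by apply: mulr_ge0; lia.
  nia.
have hY : p + 1 <= a * p - p - ph.
  have : 0 <= (a - 3) * p by apply: mulr_ge0; lia.
  nia.
have hXY : (c * p - p - pb) * (a * p - p - ph) = p * p + 1 - p * V.
  rewrite /V -hd; ring.
have : (p + 1) * (p + 1) <= (c * p - p - pb) * (a * p - p - ph).
  by apply: ler_pM; lia.
rewrite hXY => h.
have hp : 0 < p by lia.
have : p * 2 <= p * (- V) by nia.
rewrite ler_pM2l //; lia.
Qed.

Lemma decomp l (s : seq int) : (3 <= l)%N -> size s = l ->
  exists a w c, s = a :: rcons w c /\ w != [::].
Proof.
case: s => [|a s'] /=; first by move=> hl hs; rewrite -hs in hl.
case/lastP: s' => [|w c] /=; first by move=> hl hs; rewrite -hs in hl.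
move=> hl hs; exists a, w, c; split => //.
apply/eqP => hw; rewrite hw /= in hs; rewrite -hs in hl; done.
Qed.

Lemma ge2_in_V l s : in_V l s -> ge2 s.
Proof. move=> [_ [hge _]]; apply/(all_nthP 0) => j hj; exact: hge. Qed.

Lemma core a w c : w != [::] -> ge2 (a :: rcons w c) ->
  -1 <= q_first (a :: rcons w c) + q_last (a :: rcons w c) - q_full (a :: rcons w c) <= 1 ->
  (a = 2 /\ 3 <= c) \/ (c = 2 /\ 3 <= a).
Proof.
move=> wn hs /andP [hV1 hV2].
have [e1 e2 e3] := @Vexpr _ _ _ wn hs.
rewrite e1 e2 e3 in hV1 hV2.
have ha : 2 <= a by move: hs => /andP[].
have hr : ge2 (rcons w c) by move: hs => /andP[].
have hc : 2 <= c by move: hr; rewrite /ge2 all_rcons => /andP[].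
have hw : ge2 w by move: hr; rewrite /ge2 all_rcons => /andP[].
have hq := @Qpos _ hw wn.
have [h1 h2] := @PQpos w hw.
have [h3 h4] := @PQpos (behead w) (@ge2_behead _ hw).
have h5 := @Pbehead _ hw wn.
have hd := @PQdet _ wn.
have [a2|a3] : a = 2 \/ 3 <= a by lia.
- have [c2|c3] : c = 2 \/ 3 <= c by lia.
  + subst a c; have := @key1 _ _ _ _ hq h4; lia.
  + by left.
- have [c2|c3] : c = 2 \/ 3 <= c by lia.
  + by right.
  + have := @key2 _ _ _ _ _ _ a3 c3 h2 h5 h1 hd => h; by have := le_trans hV1 h.
Qed.

Lemma nth_last a (w : seq int) c : (a :: rcons w c)`_(size (a :: rcons w c)).-1 = c.
Proof. by rewrite /= size_rcons /= nth_rcons ltnn eqxx. Qed.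

Lemma sum_ge (x : seq int) : ge2 x -> 2 * (size x)%:Z <= \sum_(n <- x) n.
Proof.
elim: x => [|n x IH]; first by rewrite big_nil.
move=> /andP [hn hx]; rewrite big_cons /=; have h := IH hx; clear IH hx.
have -> : Posz (size x).+1 = Posz (size x) + 1 by rewrite -PoszD addn1.
rewrite mulrDr mulr1 addrC; exact: lerD.
Qed.

Lemma sum_split a (w : seq int) c : \sum_(n <- a :: rcons w c) n = a + \sum_(n <- w) n + c.
Proof. by rewrite big_cons -cats1 big_cat big_seq1 addrA. Qed.

Lemma sum_rcons (w : seq int) c : \sum_(n <- rcons w c) n = \sum_(n <- w) n + c.
Proof. by rewrite -cats1 big_cat big_seq1. Qed.

Lemma PoszS (l : nat) : Posz l.+1 = Posz l + 1.
Proof. by rewrite -PoszD addn1. Qed.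

Lemma sum_cons (w : seq int) c : \sum_(n <- c :: w) n = c + \sum_(n <- w) n.
Proof. by rewrite big_cons. Qed.

Lemma part3 l : (3 <= l)%N -> forall s, in_V l s -> \sum_(x <- s) x <> 3 * (l%:Z) - 4.
Proof.
elim: l => [|l IH] // hl s hV hsum.
have hs := @ge2_in_V _ _ hV.
have hsz := proj1 hV.
have [l3|l3] : (l.+1 = 3)%N \/ (3 <= l)%N by lia.
  have := @sum_ge _ hs; rewrite hsz l3 hsum; lia.
have [a [w [c [es wn]]]] := @decomp _ _ hl hsz.
subst s.
have [_ [_ hVr]] := hV.
have [e1 e2 e3] := @Vexpr _ _ _ wn hs.
have ha : 2 <= a by move: hs => /andP[].
have hr : ge2 (rcons w c) by move: hs => /andP[].
have hw : ge2 w by move: hr; rewrite /ge2 all_rcons => /andP[].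
have hsw : size w = l.-1 by move: hsz; rewrite /= size_rcons; lia.
rewrite sum_split in hsum.
have [[a2 c3]|[c2 a3]] := @core _ _ _ wn hs hVr.
- (* drop a = 2, decrease c *)
  have hs' : ge2 (rcons w (c - 1)) by rewrite /ge2 all_rcons; apply/andP; split; [lia | exact: hw].
  have hV' : in_V l (rcons w (c - 1)).
    split; first by rewrite size_rcons hsw; lia.
    split; first by move=> j hj; exact: (all_nthP 0 hs').
    have hrn : rcons w (c - 1) != [::] by case: (w).
    have f1 : q_full (rcons w (c - 1)) = (c - 1) * P w - Q w.
      by rewrite /q_full HJqP // (proj1 (PQrcons w (c - 1))).
    have f2 : q_first (rcons w (c - 1)) = (c - 1) * P (behead w) - Q (behead w).
      rewrite /q_first behead_rcons // HJqP; last by rewrite -behead_rcons //; apply: ge2_behead.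
      by rewrite (proj1 (PQrcons (behead w) (c - 1))).
    have f3 : q_last (rcons w (c - 1)) = P w.
      by rewrite qlastQ // (proj2 (PQrcons w (c - 1))).
    rewrite f1 f2 f3.
    move: hVr; rewrite e1 e2 e3 a2.
    have -> : (c - 1) * P (behead w) - Q (behead w) + P w - ((c - 1) * P w - Q w) =
      c * P w - Q w + (2 * P w - P (behead w)) -
       (2 * (c * P w - Q w) - (c * P (behead w) - Q (behead w))) by ring.
    done.
  apply: (IH l3 _ hV').
  rewrite sum_rcons; move: hsum; rewrite a2 PoszS; lia.
- (* drop c = 2, decrease a *)
  have hs' : ge2 ((a - 1) :: w) by apply/andP; split; [lia | exact: hw].
  have hV' : in_V l ((a - 1) :: w).
    split; first by rewrite /= hsw; lia.
    split; first by move=> j hj; exact: (all_nthP 0 hs').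
    have f1 : q_full ((a - 1) :: w) = (a - 1) * P w - P (behead w).
      by rewrite /q_full HJqP // (proj1 (PQcons (a - 1) _ wn)).
    have f2 : q_first ((a - 1) :: w) = P w by rewrite /q_first /= HJqP.
    have f3 : q_last ((a - 1) :: w) = (a - 1) * Q w - Q (behead w).
      by rewrite qlastQ // (proj2 (PQcons (a - 1) _ wn)).
    rewrite f1 f2 f3.
    move: hVr; rewrite e1 e2 e3 c2.
    have -> : P w + ((a - 1) * Q w - Q (behead w)) - ((a - 1) * P w - P (behead w)) =
      2 * P w - Q w + (a * P w - P (behead w)) -
       (a * (2 * P w - Q w) - (2 * P (behead w) - Q (behead w))) by ring.
    done.
  apply: (IH l3 _ hV').
  rewrite sum_cons; move: hsum; rewrite c2 PoszS; lia.
Qed.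

Theorem lemma2p7 (l : nat) : (3 <= l)%N ->
  (forall s : seq int, in_V l s -> ~ (s`_0 = 2 /\ s`_(l.-1) = 2)) /\
  (forall s : seq int, 3 <= s`_0 -> 3 <= s`_(l.-1) -> ~ in_V l s) /\
  (forall s : seq int, in_V l s -> \sum_(x <- s) x <> 3 * (l%:Z) - 4).
Proof.
move=> hl; split; last split; last exact: part3.
- move=> s hV [h0 h1].
  have hs := @ge2_in_V _ _ hV.
  have [hsz [_ hVr]] := hV.
  have [a [w [c [es wn]]]] := @decomp _ _ hl hsz; subst s.
  rewrite -hsz nth_last /= in h1; rewrite /= in h0.
  have := @core _ _ _ wn hs hVr; lia.
- move=> s h0 h1 hV.
  have hs := @ge2_in_V _ _ hV.
  have [hsz [_ hVr]] := hV.
  have [a [w [c [es wn]]]] := @decomp _ _ hl hsz; subst s.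
  rewrite -hsz nth_last /= in h1; rewrite /= in h0.
  have := @core _ _ _ wn hs hVr; lia.
Qed.
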